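(* Let $n\ge2$, $1\le r\le n-1$ and $\alpha,\beta\in\mathbb{Z}_2^n$. Then $\mathrm{adp}^{\mathrm{XR}}_r(\alpha,\beta\to0)=\mathrm{adp}^{\oplus}(\alpha,\beta\to0)$.
   Context: For $x\in\mathbb{Z}_2^n$, $x=(x_0,\dots,x_{n-1})$ is identified with the integer $\sum_i x_i2^{n-1-i}$; $+$ is addition modulo $2^n$, $\oplus$ is bitwise XOR, $x\lll r=(x_r,\dots,x_{n-1},x_0,\dots,x_{r-1})$. For $f:(\mathbb{Z}_2^n)^2\to\mathbb{Z}_2^n$, $\mathrm{adp}^f(\alpha,\beta\to\gamma)=4^{-n}\#\{(x,y): f(x+\alpha,y+\beta)=f(x,y)+\gamma\}$. $\mathrm{adp}^{\oplus}$ is this for $f(x,y)=x\oplus y$, and $\mathrm{adp}^{\mathrm{XR}}_r$ for $f(x,y)=(x\oplus y)\lll r$. *)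

(* Defs.v *)
From mathcomp Require Import all_boot all_algebra.
Set Implicit Arguments. Unset Strict Implicit. Unset Printing Implicit Defensive.
Import GRing.Theory.

(* Elements of Z_2^n are bit tuples x = (x_0,...,x_{n-1}); x_0 is the most
   significant bit: x is identified with sum_i x_i 2^(n-1-i). *)
Definition bvec (n : nat) := n.-tuple bool.

Definition bv_to_nat n (x : bvec n) : nat :=
  \sum_(i < n) (tnth x i) * 2 ^ (n - 1 - i).

(* the n low-order bits of k (i.e. k mod 2^n), MSB first *)
Definition bv_of_nat n (k : nat) : bvec n :=
  [tuple odd (k %/ 2 ^ (n - 1 - i)) | i < n].

Definition addv n (x y : bvec n) : bvec n := bv_of_nat n (bv_to_nat x + bv_to_nat y).

Definition xorv n (x y : bvec n) : bvec n :=
  [tuple xorb (tnth x i) (tnth y i) | i < n].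

Definition rotlv n (x : bvec n) (r : nat) : bvec n :=
  [tuple nth false x ((i + r) %% n) | i < n].

Definition adp n (f : bvec n -> bvec n -> bvec n) (a b g : bvec n) : rat :=
  (#|[set p : bvec n * bvec n |
        f (addv p.1 a) (addv p.2 b) == addv (f p.1 p.2) g]|%:R
   / (4 ^ n)%:R)%R.

Definition adp_xor n (a b g : bvec n) : rat := adp (@xorv n) a b g.

Definition adp_XR n (r : nat) (a b g : bvec n) : rat :=
  adp (fun x y => rotlv (xorv x y) r) a b g.

Definition zerov n : bvec n := [tuple false | _ < n].

(* Main.v *)
Require Import Defs.
From mathcomp Require Import all_boot all_algebra zify.

Lemma bv_to_nat_cons n h (t : bvec n) :
  bv_to_nat [tuple of h :: t] = h * 2 ^ n + bv_to_nat t.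
Proof.
rewrite /bv_to_nat big_ord_recl; congr (_ * _ + _).
  by rewrite /= subn1 subn0.
apply: eq_bigr => i _; rewrite (tnthS h t i).
rewrite lift0.
by congr (_ * 2 ^ _); lia.
Qed.

Lemma bv_to_nat_lt n (t : bvec n) : bv_to_nat t < 2 ^ n.
Proof.
elim: n t => [|n IH] t.
  by rewrite /bv_to_nat big_ord0.
case/tupleP: t => h t; rewrite bv_to_nat_cons expnS.
have := IH t; case: h => /=; lia.
Qed.

Lemma bit_nat n (t : bvec n) (i : 'I_n) :
  odd (bv_to_nat t %/ 2 ^ (n - 1 - i)) = tnth t i.
Proof.
elim: n t i => [|n IH] t i; first by case: i.
case/tupleP: t => h t; rewrite bv_to_nat_cons.
case: (unliftP ord0 i) => [j ->|->].
  rewrite tnthS /= subn1 /= -IH.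
  have -> : n - bump 0 j = n - 1 - j by rewrite /bump leq0n add1n; lia.
  have hn : n = (n - 1 - j) + j.+1 by have := ltn_ord j; lia.
  rewrite [in 2 ^ n]hn expnD mulnC -mulnA divnDl; last by apply: dvdn_mulr.
  rewrite mulKn ?expn_gt0 // oddD oddM expnS oddM /=.
  by [].
rewrite tnth0 /= subn1 /= subn0 divnDl ?dvdn_mull // mulnK ?expn_gt0 //.
rewrite divn_small ?bv_to_nat_lt // addn0; by case: h.
Qed.

Lemma bvK n (x : bvec n) : bv_of_nat n (bv_to_nat x) = x.
Proof. by apply: eq_from_tnth => i; rewrite tnth_mktuple bit_nat. Qed.

Lemma addvz n (x : bvec n) : Defs.addv x (zerov n) = x.
Proof.
rewrite /Defs.addv.
have -> : bv_to_nat (zerov n) = 0.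
  by rewrite /bv_to_nat big1 // => i _; rewrite tnth_mktuple.
by rewrite addn0 bvK.
Qed.

Lemma rotl_inj n r (u v : bvec n) : rotlv u r = rotlv v r -> u = v.
Proof.
move=> E; apply: eq_from_tnth => k.
have hn : 0 < n by case: k => k' /=; lia.
set i := Ordinal (ltn_pmod (k + n - r %% n) hn).
have := congr1 (fun w => tnth w i) E; rewrite !tnth_mktuple /=.
have -> : ((k + n - r %% n) %% n + r) %% n = k.
  rewrite modnDml {2}(divn_eq r n).
  have hr : r %% n < n by rewrite ltn_pmod.
  have -> : k + n - r %% n + (r %/ n * n + r %% n) = (r %/ n).+1 * n + k by lia.
  by rewrite modnMDl modn_small.
by rewrite !(tnth_nth false).
Qed.

Theorem proposition1 (n r : nat) (a b : bvec n) :
  2 <= n -> 1 <= r <= n - 1 ->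
  adp_XR r a b (zerov n) = adp_xor a b (zerov n).
Proof.
move=> _ _; rewrite /adp_XR /adp_xor /adp; congr (_ %:R / _)%R.
apply: eq_card => p; rewrite !inE !addvz.
apply/eqP/eqP; last by move->.
exact: rotl_inj.
Qed.
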